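(* Let $W_0\in\mathcal{W}$, let $s_0\in\mathbb{R}^{|I||J|}$ be a fixed vector and $S_0\in\mathbb{R}^{|I||J|\times|I||J|}$ a fixed matrix, and consider the linear assignment flow $$\dot W=\Pi_W\Big(s_0+S_0\,\Pi_{W_0}\log\frac{W}{W_0}\Big),\qquad W(0)=W_0 .$$ Then its solution admits the representation $$W(t)=\mathrm{Exp}_{W_0}\big(V(t)\big),$$ where $V(t)\in\mathcal{T}_0$ solves the linear ODE $$\dot V=\Pi_{W_0}(s_0+S_0V),\qquad V(0)=0 .$$
   Context: Let $I,J$ be finite index sets. Operations on vectors (products, quotients, $\log$, $e^{(\cdot)}$) are componentwise. $\mathcal{S}=\{p\in\mathbb{R}^{|J|}: p_j>0,\ \langle\mathbb{1},p\rangle=1\}$, $T_0=\{v\in\mathbb{R}^{|J|}:\langle\mathbb{1},v\rangle=0\}$. For $p\in\mathcal{S}$, $\Pi_p(z)=(\mathrm{Diag}(p)-pp^\top)z$ and $\mathrm{Exp}_p:T_0\to\mathcal{S}$, $\mathrm{Exp}_p(v)=\frac{p\,e^{v/p}}{\langle p,e^{v/p}\rangle}$ (whose inverse is $q\mapsto\Pi_p\log\frac{q}{p}$). The assignment manifold is $\mathcal{W}=\mathcal{S}^{|I|}$ with points $W=(W_i)_{i\in I}$, and $\mathcal{T}_0=T_0^{|I|}$; the maps $\Pi_W$ and $\mathrm{Exp}_W$ act blockwise: $(\Pi_WZ)_i=\Pi_{W_i}Z_i$, $(\mathrm{Exp}_W V)_i=\mathrm{Exp}_{W_i}(V_i)$.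 *)

(* Defs.v *)
From HB Require Import structures.
From mathcomp Require Import all_boot all_order all_algebra.
From mathcomp Require Import all_classical all_reals all_analysis.
Set Implicit Arguments. Unset Strict Implicit. Unset Printing Implicit Defensive.
Import Order.TTheory GRing.Theory Num.Theory.
Local Open Scope ring_scope.

(* Index sets I = 'I_m, J = 'I_n.  A point W of the assignment manifold
   (or a tangent vector, or an element of R^{|I||J|}) is an m x n matrix
   whose i-th row is W_i. *)
Section Assignment.
Variables (R : realType) (m n : nat).

Definition in_simplex (p : 'rV[R]_n) : Prop :=
  (forall j, 0 < p 0 j) /\ \sum_j p 0 j = 1.

Definition in_assign (W : 'M[R]_(m, n)) : Prop :=
  forall i, in_simplex (row i W).

Definition in_tangent0 (V : 'M[R]_(m, n)) : Prop :=
  forall i, \sum_j V i j = 0.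

(* (Pi_W Z)_i = (Diag(W_i) - W_i W_i^T) Z_i *)
Definition PiW (W Z : 'M[R]_(m, n)) : 'M[R]_(m, n) :=
  \matrix_(i, j) (W i j * Z i j - W i j * \sum_k W i k * Z i k).

Definition ExpW (W V : 'M[R]_(m, n)) : 'M[R]_(m, n) :=
  \matrix_(i, j) (W i j * expR (V i j / W i j) /
                  \sum_k W i k * expR (V i k / W i k)).

Definition logratio (W W0 : 'M[R]_(m, n)) : 'M[R]_(m, n) :=
  \matrix_(i, j) ln (W i j / W0 i j).

(* action of a |I||J| x |I||J| matrix S on a vector of R^{|I||J|},
   the vector being identified with an m x n matrix via mxvec *)
Definition applyS (S : 'M[R]_(m * n)) (V : 'M[R]_(m, n)) : 'M[R]_(m, n) :=
  vec_mx (mxvec V *m S^T).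

End Assignment.

(* Main.v *)
Require Import Defs.
From HB Require Import structures.
From mathcomp Require Import all_boot all_order all_algebra.
From mathcomp Require Import all_classical all_reals all_analysis.
From mathcomp Require Import ring lra.
Import Order.TTheory GRing.Theory Num.Theory.
Local Open Scope ring_scope.

Lemma entry_derive {R : realType} {m n} {M : R -> 'M[R]_(m,n)} {t : R} {M' : 'M[R]_(m,n)} i j :
  is_derive t (1:R) M M' -> is_derive t (1:R) (fun x => M x i j) (M' i j).
Proof.
case=> dM dE.
have dij := (derivable_mxP M t 1).1 dM i j.
apply: DeriveDef => //.
by rewrite -dE derive_mx // mxE.
Qed.

Lemma ln_derive (R : realType) (g : R -> R) (t d c : R) : 0 < c -> 0 < g t ->
  is_derive t (1:R) g d -> is_derive t (1:R) (fun x => ln (g x / c)) (d / g t).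
Proof.
move=> c0 g0 dg.
have h1 : is_derive t (1:R) (fun x => g x / c) (d / c).
  have -> : (fun x => g x / c) = (fun x => c^-1 *: g x).
    by apply/funext => x; rewrite /= mulrC.
  rewrite [d / c]mulrC.
  exact: is_deriveZ.
have h2 : is_derive (g t / c) 1 (@ln R) (g t / c)^-1.
  by apply: is_derive1_ln; rewrite divr_gt0.
have := @is_derive1_comp R (@ln R) (fun x => g x / c) t _ _ h2 h1.
have -> : (g t / c)^-1 * (d / c) = d / g t.
  by field; rewrite ?gt_eqF //.
done.
Qed.
Section DH.
Context {R : realType}.

Lemma is_derive_mulc {g : R -> R} {x d : R} (c : R) :
  is_derive x (1:R) g d -> is_derive x (1:R) (fun y => c * g y) (c * d).
Proof. move=> h; exact: (is_deriveZ c h). Qed.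

Lemma is_derive_subf {f g : R -> R} {x df dg : R} :
  is_derive x (1:R) f df -> is_derive x (1:R) g dg ->
  is_derive x (1:R) (fun y => f y - g y) (df - dg).
Proof. move=> hf hg; exact: (is_deriveB hf hg). Qed.

Lemma is_derive_sumf {n} {F : 'I_n -> R -> R} {x : R} {d : 'I_n -> R} :
  (forall k, is_derive x (1:R) (F k) (d k)) ->
  is_derive x (1:R) (fun y => \sum_k F k y) (\sum_k d k).
Proof.
move=> h.
have -> : (fun y => \sum_k F k y) = \sum_k F k by rewrite fct_sumE.
exact: is_derive_sum.
Qed.

Lemma is_derive_sq {g : R -> R} {x d : R} :
  is_derive x (1:R) g d -> is_derive x (1:R) (fun y => g y ^+ 2) (2 * g x * d).
Proof.
move=> h; have := is_deriveM h h.
have -> : (g * g) = (fun y => g y ^+ 2) by apply/funext => y; rewrite /= expr2.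
move=> H; apply: (is_derive_eq H).
rewrite /GRing.scale /=; ring.
Qed.
End DH.
Section Lin.
Context {R : realType} {m n : nat}.

Lemma PiWD (W Z1 Z2 : 'M[R]_(m, n)) : PiW W (Z1 + Z2) = PiW W Z1 + PiW W Z2.
Proof.
apply/matrixP => i j; rewrite !mxE.
under eq_bigr do rewrite mxE mulrDr.
rewrite big_split /=; ring.
Qed.

Lemma PiWZ (W Z : 'M[R]_(m, n)) c : PiW W (c *: Z) = c *: PiW W Z.
Proof.
apply/matrixP => i j; rewrite !mxE.
under eq_bigr do rewrite mxE mulrCA.
rewrite -mulr_sumr; ring.
Qed.

Lemma PiW0 (W : 'M[R]_(m, n)) : PiW W 0 = 0.
Proof. by have := PiWZ W 0 0; rewrite !scale0r. Qed.

Lemma PiWB (W Z1 Z2 : 'M[R]_(m, n)) : PiW W (Z1 - Z2) = PiW W Z1 - PiW W Z2.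
Proof.
by rewrite PiWD -scaleN1r PiWZ scaleN1r.
Qed.

Lemma applySD (S : 'M[R]_(m * n)) X Y : applyS S (X + Y) = applyS S X + applyS S Y.
Proof. by rewrite /applyS linearD /= mulmxDl linearD. Qed.

Lemma applySZ (S : 'M[R]_(m * n)) c X : applyS S (c *: X) = c *: applyS S X.
Proof. by rewrite /applyS linearZ /= -scalemxAl linearZ. Qed.

Lemma applySB (S : 'M[R]_(m * n)) X Y : applyS S (X - Y) = applyS S X - applyS S Y.
Proof. by rewrite applySD -scaleN1r applySZ scaleN1r. Qed.

Lemma applyS0 (S : 'M[R]_(m * n)) : applyS S 0 = 0.
Proof. by have := applySZ S 0 0; rewrite !scale0r. Qed.

Definition Aop (W0 : 'M[R]_(m, n)) (S0 : 'M[R]_(m * n)) X := PiW W0 (applyS S0 X).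

Lemma Aop_sum W0 S0 X i j :
  Aop W0 S0 X i j = \sum_k \sum_l X k l * Aop W0 S0 (delta_mx k l) i j.
Proof.
have AD : {morph Aop W0 S0 : x y / x + y >-> x + y}.
  by move=> x y; rewrite /Aop applySD PiWD.
have A0 : Aop W0 S0 0 = 0 by rewrite /Aop applyS0 PiW0.
rewrite {1}(matrix_sum_delta X) (big_morph _ AD A0) summxE.
apply: eq_bigr => k _.
rewrite (big_morph _ AD A0) summxE.
apply: eq_bigr => l _.
by rewrite /Aop applySZ PiWZ mxE.
Qed.

Lemma PiW_rowsum (W Z : 'M[R]_(m, n)) i : \sum_j W i j = 1 -> \sum_j PiW W Z i j = 0.
Proof.
move=> h; under eq_bigr do rewrite mxE.
by rewrite sumrB -mulr_suml h mul1r subrr.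
Qed.
End Lin.
Lemma gexp_derive (R : realType) (f : R -> R) (c x : R) :
  derivable f x 1 ->
  is_derive x (1:R) (fun y => f y * expR (c * y))
    ('D_1 f x * expR (c * x) + c * f x * expR (c * x)).
Proof.
move=> dfx.
have hf : is_derive x (1:R) f ('D_1 f x) by exact: derivableP dfx.
have hl : is_derive x (1:R) (fun y : R => c * y) c.
  have := is_deriveZ c (is_derive_id x (1:R)).
  by rewrite /GRing.scale /= mulr1.
have he : is_derive x (1:R) (fun y => expR (c * y)) (expR (c * x) * c).
  exact: (@is_derive1_comp R expR (fun y => c * y) x _ _ (is_derive_expR _) hl).
have := is_deriveM hf he.
move=> H; apply: (is_derive_eq H).
rewrite /GRing.scale /=; ring.
Qed.


Lemma gronwall (R : realType) (f : R -> R) (K a b : R) :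
  a < 0 < b ->
  (forall t, a < t < b -> derivable f t 1 /\ `|'D_1 f t| <= K * f t) ->
  (forall t, a < t < b -> 0 <= f t) -> f 0 = 0 ->
  forall t, a < t < b -> f t = 0.
Proof.
move=> /andP[a0 b0] df fge f00 t /andP[hat tb].
have gd : forall c x, a < x < b -> is_derive x (1:R) (fun y => f y * expR (c * y))
    ('D_1 f x * expR (c * x) + c * f x * expR (c * x)).
  by move=> c x /df [dx _]; exact: gexp_derive.
have cont : forall c (u v : R), a < u -> v < b ->
    {in `[u, v]%R, forall x, derivable (fun y => f y * expR (c * y)) x 1}.
  move=> c u v au vb x.
  rewrite in_itv /= => /andP[ux xv].
  have : a < x < b by rewrite (lt_le_trans au ux) (le_lt_trans xv vb).
  by move=> /(gd c) [].
have fe : f t * expR (0 * t) = f t by rewrite mul0r expR0 mulr1.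
have key : f t * expR ((if 0 <= t then - K else K) * t) <= 0.
  case: (leP 0 t) => t0.
  - have := @ler0_derive1_nincr R (fun y => f y * expR (- K * y)) 0 t.
    move=> /(_ _ _ (derivable_within_continuous (cont _ _ _ a0 tb)) 0 t (lexx _) t0 (lexx _)).
    rewrite mulr0 expR0 f00 mul0r; apply.
    + move=> x; rewrite in_itv /= => /andP[x0 xt].
      have : a < x < b by rewrite (lt_trans a0 x0) (lt_trans xt tb).
      by move=> /(gd (- K)) [].
    + move=> x; rewrite in_itv /= => /andP[x0 xt].
      have hx : a < x < b by rewrite (lt_trans a0 x0) (lt_trans xt tb).
      rewrite derive1E; have [_ ->] := gd (- K) x hx.
      have [_ hb] := df x hx.
      have e0 := expR_gt0 (- K * x).
      have : 'D_1 f x <= K * f x := le_trans (ler_norm _) hb.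
      move=> h; rewrite -mulrDl; apply: mulr_le0_ge0; [lra | exact: ltW].
  - have := @ger0_derive1_ndecr R (fun y => f y * expR (K * y)) t 0.
    move=> /(_ _ _ (derivable_within_continuous (cont _ _ _ hat b0)) t 0 (lexx _) (ltW t0) (lexx _)).
    rewrite mulr0 expR0 f00 mul0r; apply.
    + move=> x; rewrite in_itv /= => /andP[x0 xt].
      have : a < x < b by rewrite (lt_trans hat x0) (lt_trans xt b0).
      by move=> /(gd K) [].
    + move=> x; rewrite in_itv /= => /andP[x0 xt].
      have hx : a < x < b by rewrite (lt_trans hat x0) (lt_trans xt b0).
      rewrite derive1E; have [_ ->] := gd K x hx.
      have [_ hb] := df x hx.
      have e0 := expR_gt0 (K * x).
      have : - 'D_1 f x <= K * f x by rewrite (le_trans _ hb) // -normrN ler_norm.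
      move=> h; rewrite -mulrDl; apply: mulr_ge0; [lra | exact: ltW].
have ft0 : 0 <= f t by apply: fge; rewrite hat tb.
set c := (if 0 <= t then - K else K) in key.
have e0 := expR_gt0 (c * t).
apply/eqP; rewrite eq_le ft0 andbT.
by rewrite -(pmulr_lle0 _ e0).
Qed.

Lemma assign_facts {R : realType} {m n} {X : 'M[R]_(m, n)} :
  in_assign X -> (forall i j, 0 < X i j) /\ (forall i, \sum_j X i j = 1).
Proof.
move=> h; split.
- by move=> i j; have [h1 _] := h i; have := h1 j; rewrite mxE.
- move=> i; have [_ h2] := h i; rewrite -h2.
  by apply: eq_bigr => j _; rewrite mxE.
Qed.

Lemma single_le_sum {R : realType} {I : finType} (F : I -> R) i :
  (forall j, 0 <= F j) -> F i <= \sum_j F j.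
Proof.
move=> h; rewrite (bigD1 i) //= lerDl; exact: sumr_ge0.
Qed.

Lemma two_abs_le {R : realType} (x y : R) : 2 * `|x| * `|y| <= x ^+ 2 + y ^+ 2.
Proof.
have h1 := real_normK (num_real x).
have h2 := real_normK (num_real y).
have h3 := sqr_ge0 (`|x| - `|y|).
nra.
Qed.

Theorem proposition4p2 (R : realType) (m n : nat)
  (W0 s0 : 'M[R]_(m, n)) (S0 : 'M[R]_(m * n))
  (a b : R) (W V : R -> 'M[R]_(m, n)) :
  in_assign W0 ->
  a < 0 < b ->
  (* W solves the linear assignment flow on ]a, b[ with W(0) = W0 *)
  (forall t : R, a < t < b ->
     in_assign (W t) /\
     is_derive t (1 : R) W (PiW (W t) (s0 + applyS S0 (PiW W0 (logratio (W t) W0))))) ->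
  W 0 = W0 ->
  (* V solves the linear ODE  V' = Pi_{W0}(s0 + S0 V), V(0) = 0 *)
  (forall t, is_derive t (1 : R) V (PiW W0 (s0 + applyS S0 (V t)))) ->
  V 0 = 0 ->
  forall t : R, a < t < b -> in_tangent0 (V t) /\ W t = ExpW W0 (V t).
Proof.
move=> hW0 hab hW hW00 hV hV0.
have [W0pos W0sum] := assign_facts hW0.
pose Y := fun x => PiW W0 (logratio (W x) W0).
have dY : forall s, a < s < b -> forall i j,
    is_derive s (1:R) (fun x => Y x i j) (PiW W0 (s0 + applyS S0 (Y s)) i j).
  move=> s hs i j.
  have [hWs dW] := hW s hs.
  have [Wpos Wsum] := assign_facts hWs.
  set Z := s0 + applyS S0 (PiW W0 (logratio (W s) W0)) in dW.
  have dL : forall k, is_derive s (1:R) (fun x => ln (W x i k / W0 i k))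
      (PiW (W s) Z i k / W s i k).
    by move=> k; apply: ln_derive => //; exact: entry_derive.
  have e : (fun x => Y x i j) = (fun x => W0 i j * ln (W x i j / W0 i j) -
      W0 i j * \sum_k W0 i k * ln (W x i k / W0 i k)).
    apply/funext => x; rewrite /Y /logratio !mxE.
    by congr (_ - _ * _); apply: eq_bigr => k _; rewrite mxE.
  rewrite e.
  have := is_derive_subf (is_derive_mulc (W0 i j) (dL j))
    (is_derive_mulc (W0 i j) (is_derive_sumf (fun k => is_derive_mulc (W0 i k) (dL k)))).
  have q : forall k, PiW (W s) Z i k / W s i k = Z i k - \sum_l W s i l * Z i l.
    by move=> k; rewrite mxE; field; rewrite gt_eqF.
  move=> H; apply: (is_derive_eq H).
  rewrite /Y -/Z [RHS]mxE.
  rewrite [X in _ - W0 i j * X = _](eq_bigr (fun k => W0 i k * (Z i k - \sum_l W s i l * Z i l))); last by move=> k _; rewrite q.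
  rewrite q.
  set cc := \sum_l W s i l * Z i l.
  have hsum : \sum_k W0 i k * (Z i k - cc) = \sum_k W0 i k * Z i k - cc.
    under eq_bigr do rewrite mulrBr.
    by rewrite sumrB -mulr_suml W0sum mul1r.
  rewrite hsum; ring.
pose D := fun x => Y x - V x.
pose A := Aop W0 S0.
have dD : forall s, a < s < b -> forall i j,
    is_derive s (1:R) (fun x => D x i j) (A (D s) i j).
  move=> s hs i j.
  have -> : (fun x => D x i j) = (fun x => Y x i j - V x i j).
    by apply/funext => x; rewrite /D !mxE.
  have := is_derive_subf (dY s hs i j) (entry_derive i j (hV s)).
  move=> H; apply: (is_derive_eq H).
  have M : PiW W0 (s0 + applyS S0 (Y s)) - PiW W0 (s0 + applyS S0 (V s)) = A (D s).
    rewrite -PiWB /A /Aop /D applySB; congr (PiW _ _).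
    by rewrite opprD addrACA subrr add0r.
  by rewrite -M [RHS]mxE [X in _ = _ + X]mxE.
pose f := fun x => \sum_i \sum_j D x i j ^+ 2.
pose c := fun i j k l => A (delta_mx k l) i j.
pose K := \sum_i \sum_j \sum_k \sum_l `|c i j k l| * 2.
have fge : forall x, 0 <= f x.
  by move=> x; apply: sumr_ge0 => i _; apply: sumr_ge0 => j _; exact: sqr_ge0.
have sqle : forall x i j, D x i j ^+ 2 <= f x.
  move=> x i j; apply: (@le_trans _ _ (\sum_j D x i j ^+ 2)).
  - by apply: (single_le_sum (fun j => D x i j ^+ 2)) => l; exact: sqr_ge0.
  - apply: (single_le_sum (fun i => \sum_j D x i j ^+ 2)).
    by move=> i'; apply: sumr_ge0 => l _; exact: sqr_ge0.
have df : forall s, a < s < b -> is_derive s (1:R) f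
    (\sum_i \sum_j 2 * D s i j * A (D s) i j).
  move=> s hs; apply: is_derive_sumf => i; apply: is_derive_sumf => j.
  exact: is_derive_sq (dD s hs i j).
have f0 : f 0 = 0.
  have D0 : D 0 = 0.
    rewrite /D hV0 subr0 /Y hW00.
    have -> : logratio W0 W0 = 0.
      by apply/matrixP => i j; rewrite !mxE divff ?ln1 // gt_eqF.
    exact: PiW0.
  by rewrite /f D0; apply: big1 => i _; apply: big1 => j _; rewrite mxE expr0n.
have ft0 : forall t, a < t < b -> f t = 0.
  apply: (@gronwall R f K a b hab) => //.
  move=> s hs; have H := df s hs; split; first by case: H.
  have [_ ->] := H.
  apply: (le_trans (ler_norm_sum _ _ _)).
  apply: (@le_trans _ _ (\sum_i \sum_j \sum_k \sum_l `|c i j k l| * 2 * f s)).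
    apply: ler_sum => i _.
    apply: (le_trans (ler_norm_sum _ _ _)).
    apply: ler_sum => j _.
    rewrite /A Aop_sum -/(Aop W0 S0) -/A mulr_sumr.
    apply: (le_trans (ler_norm_sum _ _ _)); apply: ler_sum => k _.
    rewrite mulr_sumr.
    apply: (le_trans (ler_norm_sum _ _ _)); apply: ler_sum => l _.
    rewrite /c.
    set cc := A (delta_mx k l) i j.
    have h2 := two_abs_le (D s i j) (D s k l).
    have h3 := sqle s i j; have h4 := sqle s k l.
    rewrite !normrM (ger0_norm (ler0n _ 2)).
    have hc := normr_ge0 cc.
    have hx := normr_ge0 (D s i j); have hy := normr_ge0 (D s k l).
    nra.
  rewrite /K mulr_suml; apply: ler_sum => i _; rewrite mulr_suml; apply: ler_sum => j _.
  rewrite mulr_suml; apply: ler_sum => k _; rewrite mulr_suml; apply: ler_sum => l _; done.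
move=> t ht.
have Dt := ft0 t ht.
have VY : V t = Y t.
  apply/matrixP => i j; apply/eqP; rewrite eq_sym -subr_eq0.
  have : D t i j ^+ 2 <= 0 by rewrite -Dt; exact: sqle.
  have := sqr_ge0 (D t i j).
  move=> h1 h2; have : D t i j ^+ 2 = 0 by apply/eqP; rewrite eq_le h2 h1.
  by move/eqP; rewrite sqrf_eq0 /D !mxE.
rewrite VY; split.
  by move=> i; apply: PiW_rowsum.
have [hWt _] := hW t ht.
have [Wpos Wsum] := assign_facts hWt.
apply/matrixP => i j; rewrite mxE.
pose cst := \sum_k W0 i k * ln (W t i k / W0 i k).
have term : forall k, W0 i k * expR (Y t i k / W0 i k) = W t i k * expR (- cst).
  move=> k.
  have -> : Y t i k / W0 i k = ln (W t i k / W0 i k) + - cst.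
    rewrite /Y /cst /logratio !mxE.
    under eq_bigr do rewrite mxE.
    by field; rewrite gt_eqF.
  rewrite expRD lnK; last by rewrite posrE divr_gt0.
  by field; rewrite gt_eqF.
rewrite term (eq_bigr _ (fun k _ => term k)) -mulr_suml Wsum mul1r mulfK //.
by rewrite gt_eqF // expR_gt0.
Qed.
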